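(* Let $k$ be a field, $(X,\leq)$ a locally finite preordered set and $C=IC(X)$. Then the set $\{e_{x,y}\mid x,y\in X,\ x\leq y\}$ is a coradical basis of $C$.
   Context: $(X,\leq)$ is a reflexive transitive relation with all intervals $[x,y]$ finite. $IC(X)$ has $k$-basis $\{e_{x,y}\mid x\leq y\}$, $\Delta(e_{x,y})=\sum_{x\leq z\leq y}e_{x,z}\otimes e_{z,y}$, $\varepsilon(e_{x,y})=\delta_{x,y}$. The coradical $C_0$ is the sum of all simple subcoalgebras; $U\wedge V=\Delta^{-1}(U\otimes C+C\otimes V)$ and $C_n=C_0\wedge C_{n-1}$ for $n\geq 1$. A coradical basis of $C$ is a $k$-basis $\mathcal B$ with $\mathcal B\cap C_n$ a basis of $C_n$ for every $n$. *)

(* Defs.v *)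
(* Concrete model of the incidence coalgebra IC(X) over a field k:
   an element of C = IC(X) is identified with its coordinate function X*X -> k
   w.r.t. the basis {e_{x,y} | x <= y} (finite support contained in {(x,y) | x <= y});
   an element of C (x) C is identified with its coordinate function on
   (X*X)*(X*X) w.r.t. the basis {e_{x,y} (x) e_{z,w}}. *)
From mathcomp Require Import all_boot all_algebra.
Set Implicit Arguments. Unset Strict Implicit. Unset Printing Implicit Defensive.
Import GRing.Theory.
Local Open Scope ring_scope.

Section LinAlg.
Variables (k : fieldType) (I : Type).

Definition lincomb (n : nat) (a : 'I_n -> k) (f : 'I_n -> I -> k) : I -> k :=
  fun p => \sum_(i < n) a i * f i p.

Definition zerov : I -> k := fun _ => 0.

Definition subspace (W : (I -> k) -> Prop) : Prop :=
  [/\ W zerov,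
      (forall u v, W u -> W v -> W (fun p => u p + v p)) &
      (forall (c : k) u, W u -> W (fun p => c * u p))].

Definition subset (A B : (I -> k) -> Prop) : Prop := forall v, A v -> B v.

Definition span (S : (I -> k) -> Prop) : (I -> k) -> Prop :=
  fun v => exists n (a : 'I_n -> k) (f : 'I_n -> I -> k),
    (forall i, S (f i)) /\ v = lincomb a f.

Definition lin_indep (S : (I -> k) -> Prop) : Prop :=
  forall n (a : 'I_n -> k) (f : 'I_n -> I -> k),
    injective f -> (forall i, S (f i)) -> lincomb a f = zerov ->
    forall i, a i = 0.

Definition basis_of (W B : (I -> k) -> Prop) : Prop :=
  [/\ subset B W, lin_indep B & subset W (span B)].

Definition ssum (A B : (I -> k) -> Prop) : (I -> k) -> Prop :=
  fun w => exists u v, A u /\ B v /\ w = (fun p => u p + v p).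

Definition inter (A B : (I -> k) -> Prop) : (I -> k) -> Prop :=
  fun v => A v /\ B v.
End LinAlg.

Section Incidence.
Variables (k : fieldType) (X : eqType) (le : rel X).

Definition idx_ok (p : X * X) : bool := le p.1 p.2.

Definition finsupp (I : eqType) (dom : I -> bool) (f : I -> k) : Prop :=
  (forall i, f i != 0 -> dom i) /\ (exists s : seq I, forall i, f i != 0 -> i \in s).

Definition ICspace : (X * X -> k) -> Prop := finsupp idx_ok.

Definition ICtens_space : ((X * X) * (X * X) -> k) -> Prop :=
  finsupp (fun pq : (X * X) * (X * X) => idx_ok pq.1 && idx_ok pq.2).

Definition e_ (x y : X) : X * X -> k := fun p => if p == (x, y) then 1 else 0.

Definition tens (u v : X * X -> k) : (X * X) * (X * X) -> k :=
  fun pq => u pq.1 * v pq.2.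

Definition tensS (U V : (X * X -> k) -> Prop) : ((X * X) * (X * X) -> k) -> Prop :=
  span (fun t => exists u v, U u /\ V v /\ t = tens u v).

(* comultiplication: Delta(e_{x,y}) = sum_{x<=z<=y} e_{x,z} (x) e_{z,y}, extended
   linearly; coefficient of e_{a,b} (x) e_{c,d} in Delta(f) is [b = c, a<=b<=d] f(a,d) *)
Definition Delta (f : X * X -> k) : (X * X) * (X * X) -> k :=
  fun pq => let: ((a, b), (c, d)) := pq in
            if (b == c) && le a b && le b d then f (a, d) else 0.

Definition subcoalgebra (D : (X * X -> k) -> Prop) : Prop :=
  [/\ subspace D, subset D ICspace &
      forall d, D d -> tensS D D (Delta d)].

Definition simple_subcoalgebra (D : (X * X -> k) -> Prop) : Prop :=
  [/\ subcoalgebra D, (exists d, D d /\ d <> @zerov k (X * X)) &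
      forall E, subcoalgebra E -> subset E D ->
        (forall d, E d -> d = @zerov k (X * X)) \/ subset D E].

Definition coradical : (X * X -> k) -> Prop :=
  span (fun c => exists D, simple_subcoalgebra D /\ D c).

Definition wedge (U V : (X * X -> k) -> Prop) : (X * X -> k) -> Prop :=
  fun c => ICspace c /\ ssum (tensS U ICspace) (tensS ICspace V) (Delta c).

Fixpoint corad_filt (n : nat) : (X * X -> k) -> Prop :=
  match n with
  | 0 => coradical
  | n'.+1 => wedge coradical (corad_filt n')
  end.

Definition coradical_basis (B : (X * X -> k) -> Prop) : Prop :=
  basis_of ICspace B /\ forall n, basis_of (corad_filt n) (inter B (corad_filt n)).

Definition e_basis : (X * X -> k) -> Prop :=
  fun f => exists x y, le x y /\ f = e_ x y.
End Incidence.

(* Main.v *)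
Require Import Defs.
From mathcomp Require Import all_boot all_algebra.
From Stdlib Require Import FunctionalExtensionality Classical PropExtensionality.
Set Implicit Arguments. Unset Strict Implicit. Unset Printing Implicit Defensive.
Import GRing.Theory.
Local Open Scope ring_scope.

Section Lin.
Variables (k : fieldType) (I : Type).

Fixpoint allS (S : (I -> k) -> Prop) (s : seq (k * (I -> k))) : Prop :=
  match s with [::] => True | x :: s' => S x.2 /\ allS S s' end.

Definition sumv (s : seq (k * (I -> k))) : I -> k :=
  fun p => \sum_(x <- s) x.1 * x.2 p.

Lemma allS_nth (S : (I -> k) -> Prop) s i : allS S s -> (i < size s)%N -> S (nth (0, @zerov k I) s i).2.
Proof.
elim: s i => [|x s IH] [|i] //=; first by case.
by case=> _ H; rewrite ltnS; apply: IH.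
Qed.

Lemma allS_mono (S T : (I -> k) -> Prop) s : Defs.subset S T -> allS S s -> allS T s.
Proof. by move=> ST; elim: s => [|x s IH] //= [H1 H2]; split; [apply: ST|apply: IH]. Qed.

Lemma allS_cat (S : (I -> k) -> Prop) s1 s2 : allS S s1 -> allS S s2 -> allS S (s1 ++ s2).
Proof. by elim: s1 => [|x s IH] //= [H1 H2] H3; split => //; apply: IH. Qed.

Lemma span_of_seq (S : (I -> k) -> Prop) s : allS S s -> Defs.span S (sumv s).
Proof.
move=> H; exists (size s), (fun i => (nth (0, @zerov k I) s i).1),
  (fun i => (nth (0, @zerov k I) s i).2); split.
  by move=> i; apply: allS_nth.
apply: functional_extensionality => p.
by rewrite /sumv /lincomb (big_nth (0, @zerov k I)) big_mkord.
Qed.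

Lemma span_to_seq (S : (I -> k) -> Prop) v : Defs.span S v -> exists s, allS S s /\ v = sumv s.
Proof.
case=> n [a [f [Hf ->]]].
exists [seq (a i, f i) | i <- index_enum 'I_n]; split.
  by elim: (index_enum 'I_n) => [|i r IH] //=.
apply: functional_extensionality => p.
by rewrite /sumv big_map /lincomb.
Qed.

Lemma span_subspace (S : (I -> k) -> Prop) : subspace (Defs.span S).
Proof.
split.
- have -> : @zerov k I = sumv [::].
    by apply: functional_extensionality => p; rewrite /sumv big_nil.
  exact: span_of_seq.
- move=> u v /span_to_seq [s1 [H1 ->]] /span_to_seq [s2 [H2 ->]].
  have -> : (fun p => sumv s1 p + sumv s2 p) = sumv (s1 ++ s2).
    by apply: functional_extensionality => p; rewrite /sumv big_cat.
  by apply: span_of_seq; apply: allS_cat.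
- move=> c u /span_to_seq [s [H ->]].
  have -> : (fun p => c * sumv s p) = sumv [seq (c * x.1, x.2) | x <- s].
    apply: functional_extensionality => p; rewrite /sumv big_map mulr_sumr.
    by apply: eq_bigr => x _; rewrite mulrA.
  apply: span_of_seq; by elim: s H => [|x s IH] //= [H1 H2]; split => //; apply: IH.
Qed.

Lemma span_gen (S : (I -> k) -> Prop) v : S v -> Defs.span S v.
Proof.
move=> H; have -> : v = sumv [:: (1, v)].
  by apply: functional_extensionality => p; rewrite /sumv big_seq1 mul1r.
by apply: span_of_seq.
Qed.

Lemma seq_in_sub (W : (I -> k) -> Prop) s : subspace W -> allS W s -> W (sumv s).
Proof.
case=> W0 WD WZ; elim: s => [|x s IH] /=.
  have -> : sumv [::] = @zerov k I.
    by apply: functional_extensionality => p; rewrite /sumv big_nil.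
  by [].
case=> H1 H2.
have -> : sumv (x :: s) = (fun p => (fun p => x.1 * x.2 p) p + sumv s p).
  by apply: functional_extensionality => p; rewrite /sumv big_cons.
by apply: WD; [apply: WZ | apply: IH].
Qed.

Lemma span_sub (W S : (I -> k) -> Prop) : subspace W -> Defs.subset S W -> Defs.subset (Defs.span S) W.
Proof.
move=> sW SW v /span_to_seq [s [H ->]]; apply: seq_in_sub => //.
exact: allS_mono H.
Qed.

Lemma span_zero (S : (I -> k) -> Prop) v p : (forall g, S g -> g p = 0) -> Defs.span S v -> v p = 0.
Proof.
move=> H /span_to_seq [s [Hs ->]]; rewrite /sumv.
elim: s Hs => [|x s IH] /=; first by rewrite big_nil.
by case=> H1 H2; rewrite big_cons IH // H // mulr0 addr0.
Qed.

Lemma sum_in (J : eqType) (W : (I -> k) -> Prop) (s : seq J) (P : pred J) (F : J -> I -> k) :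
  subspace W -> (forall x, x \in s -> P x -> W (F x)) ->
  W (fun q => \sum_(x <- s | P x) F x q).
Proof.
case=> W0 WD WZ; elim: s => [|x s IH] H.
  have -> : (fun q => \sum_(x <- [::] | P x) F x q) = @zerov k I.
    by apply: functional_extensionality => p; rewrite big_nil.
  by [].
have IH' : W (fun q => \sum_(y <- s | P y) F y q) by apply: IH => y ys; apply: H; rewrite inE ys orbT.
case Px: (P x).
  have -> : (fun q => \sum_(y <- x :: s | P y) F y q) =
            (fun q => F x q + (fun q => \sum_(y <- s | P y) F y q) q).
    by apply: functional_extensionality => p; rewrite big_cons Px.
  by apply: WD => //; apply: H => //; rewrite mem_head.
have -> : (fun q => \sum_(y <- x :: s | P y) F y q) =
          (fun q => \sum_(y <- s | P y) F y q).
  by apply: functional_extensionality => p; rewrite big_cons Px.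
by [].
Qed.

Lemma scale_in (W : (I -> k) -> Prop) c u : subspace W -> W u -> W (fun q => c * u q).
Proof. by case=> _ _ WZ; apply: WZ. Qed.

End Lin.

Lemma sum_unique (k : fieldType) (J : eqType) (s : seq J) (P : pred J) j (F : J -> k) :
  uniq s -> (forall i, i \in s -> P i -> i != j -> F i = 0) ->
  \sum_(i <- s | P i) F i = if (j \in s) && P j then F j else 0.
Proof.
move=> us H; rewrite big_mkcond.
case: ifP => [/andP [js Pj]|Hj].
  rewrite (bigD1_seq j) //= Pj big1_seq ?addr0 // => i /andP [ij is_].
  by case: ifP => // Pi; apply: H.
rewrite big1_seq // => i /andP [_ is_].
case: ifP => // Pi; apply: H => //; apply/negP => /eqP ij; subst i.
by rewrite is_ Pi in Hj.
Qed.

Section Inc.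
Variables (k : fieldType) (X : eqType) (le : rel X).
Hypothesis le_refl : forall x, le x x.
Hypothesis le_trans : forall x y z, le x y -> le y z -> le x z.
Hypothesis loc_fin : forall x y, exists s : seq X, forall z, le x z && le z y -> z \in s.

Notation IC := (@ICspace k X le).
Notation E := (@e_ k X).

Lemma ic_le c p : IC c -> c p != 0 -> le p.1 p.2.
Proof. by case=> H _ /H. Qed.

Lemma e_supp a b q : E a b q != 0 -> q = (a, b).
Proof. by rewrite /e_; case: (q =P (a, b)) => [-> //|]; rewrite eqxx. Qed.

Lemma e_at a b : E a b (a, b) = 1.
Proof. by rewrite /e_ eqxx. Qed.

Lemma e_neq0 a b : E a b <> @zerov k (X * X).
Proof. by move=> H; have := e_at a b; rewrite H /zerov => /eqP; rewrite eq_sym oner_eq0. Qed.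

Lemma ic_e a b : le a b -> IC (E a b).
Proof.
move=> lab; split.
  by move=> q /e_supp ->; rewrite /idx_ok.
by exists [:: (a, b)] => q /e_supp ->; rewrite mem_seq1.
Qed.

Definition Coord (Q : X * X -> Prop) : (X * X -> k) -> Prop :=
  fun c => IC c /\ forall p, c p != 0 -> Q p.

Lemma Coord_subspace Q : subspace (Coord Q).
Proof.
split.
- split; first by split => [p|]; rewrite /zerov ?eqxx //; exists [::].
  by move=> p; rewrite /zerov eqxx.
- move=> u v [[Hu1 [su Hsu]] Qu] [[Hv1 [sv Hsv]] Qv]; split; first split.
  + move=> p H; case: (eqVneq (u p) 0) => [u0|]; last by apply: Hu1.
    by apply: Hv1; rewrite u0 add0r in H.
  + exists (su ++ sv) => p H; rewrite mem_cat.
    case: (eqVneq (u p) 0) => [u0|/Hsu -> //].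
    by rewrite u0 add0r in H; rewrite Hsv ?orbT.
  + move=> p H; case: (eqVneq (u p) 0) => [u0|]; last by apply: Qu.
    by apply: Qv; rewrite u0 add0r in H.
- move=> c u [[Hu1 [su Hsu]] Qu]; split; first split.
  + by move=> p H; apply: Hu1; apply: contraNN H => /eqP ->; rewrite mulr0.
  + by exists su => p H; apply: Hsu; apply: contraNN H => /eqP ->; rewrite mulr0.
  + by move=> p H; apply: Qu; apply: contraNN H => /eqP ->; rewrite mulr0.
Qed.

Lemma ic_subspace : subspace IC.
Proof.
have -> : IC = Coord (fun _ => True).
  apply: functional_extensionality => c; apply: propositional_extensionality.
  by split => [H|[]//]; split.
exact: Coord_subspace.
Qed.

Lemma allS_map (J : eqType) (S : (X * X -> k) -> Prop) (s : seq J) (g : J -> k * (X * X -> k)) :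
  (forall p, p \in s -> S (g p).2) -> allS S (map g s).
Proof.
elim: s => [|x s IH] //= H; split; first by apply: H; rewrite mem_head.
by apply: IH => p ps; apply: H; rewrite inE ps orbT.
Qed.

Lemma ic_expand c : IC c -> exists s : seq (X * X),
  [/\ uniq s, (forall p, p \in s -> c p != 0), (forall p, c p != 0 -> p \in s) &
      c = sumv [seq (c p, E p.1 p.2) | p <- s]].
Proof.
case=> _ [s0 Hs0]; set s := undup [seq p <- s0 | c p != 0].
have ms p : (p \in s) = (c p != 0).
  rewrite mem_undup mem_filter; case: (eqVneq (c p) 0) => //= H.
  by rewrite Hs0 // H.
exists s; split => //; first exact: undup_uniq.
- by move=> p; rewrite ms.
- by move=> p; rewrite ms.
apply: functional_extensionality => q; rewrite /sumv big_map.
rewrite (sum_unique (j := q)) ?undup_uniq //=.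
  rewrite andbT ms; case: eqP => [->|] //.
  by rewrite /e_ -surjective_pairing eqxx mulr1.
move=> p _ _ pq; rewrite /e_ -surjective_pairing.
by case: eqP => [qp|]; [rewrite qp eqxx in pq | rewrite mulr0].
Qed.

Lemma lin_indep_e : lin_indep (@e_basis k X le).
Proof.
move=> n a f inj Hf H i.
case: (Hf i) => x [y [lxy fi]].
have := congr1 (fun g => g (x, y)) H; rewrite /lincomb /zerov.
rewrite (bigD1 i) //= fi e_at mulr1 big1 ?addr0 // => j ji.
case: (Hf j) => x' [y' [_ fj]].
rewrite fj /e_; case: eqP => [[ex ey]|]; last by rewrite mulr0.
have : f j = f i by rewrite fi fj ex ey.
by move/inj => jeq; rewrite jeq eqxx in ji.
Qed.

Lemma basis_lemma (W B : (X * X -> k) -> Prop) :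
  Defs.subset W IC -> Defs.subset B W -> Defs.subset B (@e_basis k X le) ->
  (forall c, W c -> forall p, c p != 0 -> B (E p.1 p.2)) ->
  Defs.basis_of W B.
Proof.
move=> WI BW Be Hsp; split => //.
  move=> n a f inj Hf; apply: lin_indep_e => // i; exact: Be.
move=> c Wc; case: (ic_expand (WI _ Wc)) => s [_ H1 _ ->].
apply: span_of_seq; apply: allS_map => p /H1; exact: Hsp.
Qed.

Lemma tens_slice_r (U V : (X * X -> k) -> Prop) t p :
  subspace V -> tensS U V t -> V (fun r => t (p, r)).
Proof.
move=> sV /span_to_seq [s [Hs ->]]; case: (sV) => V0 VD VZ.
elim: s Hs => [|x s IH] /=.
  have -> : (fun r => sumv [::] (p, r)) = @zerov k (X * X).
    by apply: functional_extensionality => r; rewrite /sumv big_nil.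
  by [].
case=> [[u [v [Uu [Vv ex]]]] Hs].
have -> : (fun r => sumv (x :: s) (p, r)) =
   (fun r => (fun r => (x.1 * u p) * v r) r + (fun r => sumv s (p, r)) r).
  by apply: functional_extensionality => r; rewrite /sumv big_cons ex /tens /= mulrA.
by apply: VD; [apply: VZ | apply: IH].
Qed.

Lemma tens_slice_l (U V : (X * X -> k) -> Prop) t q :
  subspace U -> tensS U V t -> U (fun l => t (l, q)).
Proof.
move=> sU /span_to_seq [s [Hs ->]]; case: (sU) => U0 UD UZ.
elim: s Hs => [|x s IH] /=.
  have -> : (fun r => sumv [::] (r, q)) = @zerov k (X * X).
    by apply: functional_extensionality => r; rewrite /sumv big_nil.
  by [].
case=> [[u [v [Uu [Vv ex]]]] Hs].
have -> : (fun r => sumv (x :: s) (r, q)) =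
   (fun r => (fun r => (x.1 * v q) * u r) r + (fun r => sumv s (r, q)) r).
  apply: functional_extensionality => r; rewrite /sumv big_cons ex /tens /=.
  by rewrite [u r * _]mulrC mulrA.
by apply: UD; [apply: UZ | apply: IH].
Qed.

Lemma tens_zero_l (U V : (X * X -> k) -> Prop) t a b :
  (forall u, U u -> u a = 0) -> tensS U V t -> t (a, b) = 0.
Proof.
by move=> H; apply: span_zero => g [u [v [Uu [Vv ->]]]]; rewrite /tens /= H // mul0r.
Qed.

Lemma tens_zero_r (U V : (X * X -> k) -> Prop) t a b :
  (forall v, V v -> v b = 0) -> tensS U V t -> t (a, b) = 0.
Proof.
by move=> H; apply: span_zero => g [u [v [Uu [Vv ->]]]]; rewrite /tens /= H // mulr0.
Qed.

Lemma extr_r (D : (X * X -> k) -> Prop) (c : X * X -> k) p : subcoalgebra le D -> D c -> D (fun r => Delta le c (p, r)).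
Proof. by case=> sD _ HD Dc; apply: tens_slice_r (HD _ Dc). Qed.

Lemma extr_l (D : (X * X -> k) -> Prop) (c : X * X -> k) q : subcoalgebra le D -> D c -> D (fun l => Delta le c (l, q)).
Proof. by case=> sD _ HD Dc; apply: tens_slice_l (HD _ Dc). Qed.

Lemma E2 (D : (X * X -> k) -> Prop) (c : X * X -> k) p : subcoalgebra le D -> D c -> c p != 0 -> D (E p.1 p.2).
Proof.
move=> sD Dc; have Ic : IC c by case: sD => _ H _; apply: H.
case: p => a b /= cp; have lab := ic_le Ic cp; rewrite /= in lab.
have Dg := extr_r (a, a) sD Dc.
have Dh := extr_l (b, b) sD Dg.
have -> : E a b = fun q => (c (a, b))^-1 *
   (fun l => Delta le (fun r => Delta le c ((a, a), r)) (l, (b, b))) q.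
  apply: functional_extensionality => -[x y]; rewrite /Delta /e_ xpair_eqE /=.
  case: (eqVneq x a) => [->|xa]; case: (eqVneq y b) => [->|yb];
    rewrite ?eqxx ?le_refl ?lab /= ?mulr0 ?mulVf //.
  by case: ifP => _; rewrite mulr0.
by apply: scale_in => //; case: sD.
Qed.

Lemma E1 (D : (X * X -> k) -> Prop) a b q : subcoalgebra le D -> D (E a b) -> le a q -> le q b ->
  D (E q b) /\ D (E a q).
Proof.
move=> sD Dab laq lqb; split.
  have -> : E q b = fun r => Delta le (E a b) ((a, q), r).
    apply: functional_extensionality => -[y d]; rewrite /Delta /e_ !xpair_eqE /=.
    rewrite eqxx /= laq /=.
    case: (eqVneq y q) => _; case: (eqVneq d b) => [->|_] //=; rewrite ?lqb //;
      by case: ifP.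
  exact: extr_r.
have -> : E a q = fun l => Delta le (E a b) (l, (q, b)).
  apply: functional_extensionality => -[x y]; rewrite /Delta /e_ !xpair_eqE /=.
  rewrite eqxx andbT.
  case: (eqVneq x a) => [->|_]; case: (eqVneq y q) => [->|_] //=;
    rewrite ?laq ?lqb //; by case: ifP.
exact: extr_l.
Qed.

Definition eqv x y := le x y /\ le y x.

Definition M x := Coord (fun p => eqv x p.1 /\ eqv x p.2).

Lemma M_e x a b : eqv x a -> eqv x b -> M x (E a b).
Proof.
move=> [h1 h2] [h3 h4]; split; first by apply: ic_e; apply: le_trans h2 h3.
by move=> q /e_supp -> /=.
Qed.

Lemma M_sub (D : (X * X -> k) -> Prop) x a b : subcoalgebra le D -> D (E a b) -> eqv x a -> eqv x b ->
  Defs.subset (M x) D.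
Proof.
move=> sD Dab [xa ax] [xb bx] c [Ic Hc].
case: (ic_expand Ic) => s [_ H1 _ ->].
apply: seq_in_sub; first by case: sD.
apply: allS_map => p /H1 /Hc [[x1 p1x] [x2 p2x]] /=.
have [D1 _] := E1 sD Dab (le_trans ax x1) (le_trans p1x xb).
by case: (E1 sD D1 (le_trans p1x x2) (le_trans p2x xb)).
Qed.

Lemma T_exists (s : seq (X * X)) : exists T : seq X,
  uniq T /\ forall p z, p \in s -> le p.1 z -> le z p.2 -> z \in T.
Proof.
elim: s => [|p s [T [_ HT]]]; first by exists [::].
case: (loc_fin p.1 p.2) => s1 Hs1.
exists (undup (s1 ++ T)); split; first exact: undup_uniq.
move=> q z; rewrite inE mem_undup mem_cat => /orP [/eqP ->|qs] l1 l2.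
  by rewrite Hs1 // l1 l2.
by rewrite (HT q z qs l1 l2) orbT.
Qed.

Lemma Delta_expand (c : X * X -> k) : IC c -> exists s (T : seq X),
  (forall p, p \in s -> c p != 0) /\
  Delta le c = fun pq => \sum_(p <- s) \sum_(z <- T | le p.1 z && le z p.2)
                          c p * tens (E p.1 z) (E z p.2) pq.
Proof.
move=> Ic; case: (ic_expand Ic) => s [us H1 H2 _].
case: (T_exists s) => T [uT HT].
exists s, T; split => //.
apply: functional_extensionality => -[[x y] [y' w]].
rewrite /Delta (sum_unique (P := xpredT) (j := (x, w))) //=; last first.
  move=> p _ _ pxw; rewrite big1 // => z _.
  rewrite /tens /e_ !xpair_eqE /=.
  case: (eqVneq x p.1) => [ex|]; case: (eqVneq w p.2) => [ew|];
    rewrite ?andbF /= ?mul0r ?mulr0 //=.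
  by rewrite ex ew -surjective_pairing eqxx in pxw.
case: (boolP ((x, w) \in s)) => xw; last first.
  have -> : c (x, w) = 0 by apply/eqP; apply: contraNT xw; apply: H2.
  by case: ifP.
rewrite andbT (sum_unique (j := y)) //; last first.
  move=> z _ _ zy; rewrite /tens /e_ !xpair_eqE eq_sym (negbTE zy) /=.
  by rewrite andbF mul0r mulr0.
case lxy: (le x y); case lyw: (le y w); rewrite ?andbF ?andbT //=.
rewrite (HT (x, w) y xw lxy lyw) /tens /e_ !xpair_eqE !eqxx /= mul1r.
by rewrite eq_sym; case: ifP; rewrite ?mulr1 ?mulr0.
Qed.

Lemma M_subco x : subcoalgebra le (M x).
Proof.
split; first exact: Coord_subspace.
  by move=> c [].
move=> c [Ic Hc]; case: (Delta_expand Ic) => s [T [H1 ->]].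
apply: (sum_in (P := xpredT)); first exact: span_subspace.
move=> p ps _; have [[xp1 p1x] [xp2 p2x]] := Hc p (H1 p ps).
apply: sum_in; first exact: span_subspace.
move=> z _ /andP [l1 l2].
apply: scale_in; first exact: span_subspace.
have hz : eqv x z by split; [apply: le_trans xp1 l1 | apply: le_trans l2 p2x].
apply: span_gen; exists (E p.1 z), (E z p.2); split; last split => //.
  exact: (M_e (conj xp1 p1x) hz).
exact: (M_e hz (conj xp2 p2x)).
Qed.

Lemma M_simple x : simple_subcoalgebra le (M x).
Proof.
split; first exact: M_subco.
  by exists (E x x); split; [apply: M_e | apply: e_neq0].
move=> F sF FM.
case: (classic (exists d p, F d /\ d p != 0)) => [[d [p [Fd dp]]]|Hn]; [right|left].
  have FE := E2 sF Fd dp.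
  have [h1 h2] := (FM _ Fd).2 p dp.
  exact: M_sub sF FE h1 h2.
move=> d Fd; apply: functional_extensionality => p; rewrite /zerov.
case: (eqVneq (d p) 0) => // dp; exfalso; apply: Hn; by exists d, p.
Qed.

Lemma C0_char (c : X * X -> k) : coradical le c <-> Coord (fun p => le p.2 p.1) c.
Proof.
split.
  apply: span_sub; first exact: Coord_subspace.
  move=> g [D [[sD [d0 _] Hsimp] Dg]].
  have Ig : IC g by case: sD => _ H _; apply: H.
  split => // p gp; case: (boolP (le p.2 p.1)) => // nl; exfalso.
  have Dab := E2 sD Dg gp.
  have lab := ic_le Ig gp.
  have [_ Daa] := E1 sD Dab (le_refl p.1) lab.
  have MD := M_sub sD Daa (conj (le_refl p.1) (le_refl p.1)) (conj (le_refl p.1) (le_refl p.1)).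
  case: (Hsimp _ (M_subco p.1) MD) => [H0|DM].
    by apply: (@e_neq0 p.1 p.1); apply: H0; apply: M_e; split.
  have h1 : E p.1 p.2 (p.1, p.2) != 0 by rewrite e_at oner_eq0.
  have [_ [_ h]] := (DM _ Dab).2 (p.1, p.2) h1.
  by rewrite h in nl.
case=> Ic Hc; case: (ic_expand Ic) => s [_ H1 _ ->].
apply: seq_in_sub; first exact: span_subspace.
apply: allS_map => p /H1 cp /=.
apply: span_gen; exists (M p.1); split; first exact: M_simple.
by apply: M_e; split => //; [apply: ic_le cp | apply: Hc].
Qed.

Fixpoint Pn (n : nat) (p : X * X) : Prop :=
  match n with
  | 0 => le p.2 p.1
  | n'.+1 => forall z, le p.1 z -> le z p.2 -> le z p.1 \/ Pn n' (z, p.2)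
  end.

Lemma filt_char n (c : X * X -> k) : corad_filt le n c <-> Coord (Pn n) c.
Proof.
elim: n c => [|n IH] c; first exact: C0_char.
rewrite /= /wedge; split.
  case=> Ic [u [v [Hu [Hv Heq]]]]; split => // p cp z l1 l2.
  case: (boolP (le z p.1)) => [h|nh]; [by left|right].
  case: (classic (Pn n (z, p.2))) => // nP; exfalso.
  have := congr1 (fun f => f ((p.1, z), (z, p.2))) Heq.
  rewrite /Delta /= eqxx l1 l2 /= -surjective_pairing.
  rewrite (tens_zero_l _ _ Hu); last first.
    move=> w /C0_char [_ Hw]; case: (eqVneq (w (p.1, z)) 0) => // /(Hw (p.1, z)) /= h.
    by rewrite h in nh.
  rewrite (tens_zero_r _ _ Hv); last first.
    move=> w /IH [_ Hw]; case: (eqVneq (w (z, p.2)) 0) => // /(Hw (z, p.2)) h.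
    by case: nP.
  by rewrite addr0 => /eqP; rewrite (negbTE cp).
case=> Ic Hc; split => //.
case: (Delta_expand Ic) => s [T [H1 Heq]].
exists (fun pq => \sum_(p <- s) \sum_(z <- T | (le p.1 z && le z p.2) && le z p.1)
          c p * tens (E p.1 z) (E z p.2) pq).
exists (fun pq => \sum_(p <- s) \sum_(z <- T | (le p.1 z && le z p.2) && ~~ le z p.1)
          c p * tens (E p.1 z) (E z p.2) pq).
split; [|split].
- apply: (sum_in (P := xpredT)); first exact: span_subspace.
  move=> p ps _; apply: sum_in; first exact: span_subspace.
  move=> z _ /andP [/andP [l1 l2] l3].
  apply: scale_in; first exact: span_subspace.
  apply: span_gen; exists (E p.1 z), (E z p.2); split; last split => //.
    by apply/C0_char; split; [apply: ic_e | move=> q /e_supp ->].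
  exact: ic_e.
- apply: (sum_in (P := xpredT)); first exact: span_subspace.
  move=> p ps _; apply: sum_in; first exact: span_subspace.
  move=> z _ /andP [/andP [l1 l2] l3].
  apply: scale_in; first exact: span_subspace.
  apply: span_gen; exists (E p.1 z), (E z p.2); split; first exact: ic_e.
  split => //; apply/IH; split; first exact: ic_e.
  move=> q /e_supp -> /=.
  by case: (Hc p (H1 p ps) z l1 l2) => // h; rewrite h in l3.
- rewrite Heq; apply: functional_extensionality => pq.
  rewrite -big_split; apply: eq_bigr => p _ /=.
  by rewrite (bigID (fun z => le z p.1)).
Qed.

Lemma main_sec : coradical_basis le (@e_basis k X le).
Proof.
split.
  apply: basis_lemma => //.
  - by move=> v [x [y [lxy ->]]]; apply: ic_e.
  - by move=> c Ic p cp; exists p.1, p.2; split => //; apply: ic_le cp.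
move=> n; apply: basis_lemma.
- by move=> c /filt_char [].
- by move=> c [].
- by move=> c [].
- move=> c /filt_char [Ic Hc] p cp; split.
    by exists p.1, p.2; split => //; apply: ic_le cp.
  apply/filt_char; split; first by apply: ic_e; apply: ic_le cp.
  by move=> q /e_supp ->; rewrite -surjective_pairing; apply: Hc.
Qed.

End Inc.

Theorem mainTheorem6 (k : fieldType) (X : eqType) (le : rel X)
  (le_refl : forall x, le x x)
  (le_trans : forall x y z, le x y -> le y z -> le x z)
  (loc_fin : forall x y, exists s : seq X, forall z, le x z && le z y -> z \in s) :
  @coradical_basis k X le (@e_basis k X le).
Proof. exact: main_sec. Qed.
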